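(* For any $n$ and $k$ with $k=o(\sqrt n)$, there exists a binary $k$-batch code of dimension $n$ with redundancy $\mathcal{O}(n^{2/3}k^{5/3})$. In particular, for $0<\epsilon<1/2$, $r_B(n,n^\epsilon)=\mathcal{O}(n^{2/3+5\epsilon/3})$.
   Context: A binary linear code of length $N$ encoding $n$ information bits $x_1,\dots,x_n$ is a $k$-batch code if for every multiset $\{i_1,\dots,i_k\}$ of indices there exist $k$ mutually disjoint sets $R_1,\dots,R_k$ of coordinates such that $x_{i_j}$ is a function of the codeword bits indexed by $R_j$. Its redundancy is $N-n$; $r_B(n,k)$ is the minimum redundancy of a binary $k$-batch code of dimension $n$. *)

(* Defs.v *)
From Stdlib Require Import Reals.
From mathcomp Require Import all_boot all_algebra.

Set Implicit Arguments.
Unset Strict Implicit.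
Unset Printing Implicit Defensive.

Local Open Scope ring_scope.

(* A binary linear code of length N and dimension n, given by a generator
   matrix G of full row rank n; the information word x : 'rV_n is encoded
   as the codeword x *m G. *)

Definition recovers (n N : nat) (G : 'M['F_2]_(n, N)) (R : {set 'I_N}) (i : 'I_n) : Prop :=
  exists f : ('I_N -> 'F_2) -> 'F_2,
    forall x : 'rV['F_2]_n,
      x ord0 i = f (fun j => if j \in R then (x *m G) ord0 j else 0).

(* k-batch code: for every multiset {i_1,...,i_k} of indices (given as a
   list idx : 'I_k -> 'I_n, repetitions allowed) there are k pairwise
   disjoint coordinate sets R_1..R_k with x_{i_j} recoverable from R_j. *)
Definition is_batch_code (n N k : nat) (G : 'M['F_2]_(n, N)) : Prop :=
  \rank G = n /\
  forall idx : 'I_k -> 'I_n,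
    exists R : 'I_k -> {set 'I_N},
      (forall j j' : 'I_k, j != j' -> [disjoint R j & R j']) /\
      (forall j : 'I_k, recovers G (R j) (idx j)).

(* There is a binary k-batch code of dimension n with redundancy N - n <= r;
   i.e. r_B(n,k) <= r. *)
Definition batch_code_with_redundancy (n k r : nat) : Prop :=
  exists (N : nat) (G : 'M['F_2]_(n, N)), is_batch_code k G /\ (N - n <= r)%N.

Definition floor_pow (n : nat) (eps : R) : nat :=
  Z.to_nat (Int_part (Rpower (INR n) eps)%R).

Local Open Scope R_scope.
Definition one_half : R := 1 / 2.
Definition cor_exponent (eps : R) : R := 2 / 3 + 5 * eps / 3.

(* Main.v *)
Require Import Defs.
From Stdlib Require Import Reals Lra ZArith.
From mathcomp Require Import all_boot all_algebra all_field.
From mathcomp Require Import ring zify.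
Set Implicit Arguments. Unset Strict Implicit. Unset Printing Implicit Defensive.
Import GRing.Theory.

Module Helpers.
Section S_A.
Local Open Scope ring_scope.


Section Geo.
Variable F : finFieldType.
Definition Pt := (F * F * F)%type.
Definition phi (s : F) (p : Pt) : F * F := (p.1.2 - s * p.1.1, p.2 - s ^+ 2 * p.1.1).

Lemma online_eq s (p P : Pt) : phi s p = phi s P ->
  p = ((P.1.1 + (p.1.1 - P.1.1)), P.1.2 + s * (p.1.1 - P.1.1), P.2 + s^+2 * (p.1.1 - P.1.1)).
Proof.
case: p => [[x1 y1] z1]; case: P => [[x0 y0] z0] /= [h1 h2].
congr (_, _, _).
- by rewrite addrC subrK.
- have -> : y1 = y1 - s * x1 + s * x1 by rewrite subrK.
  rewrite h1; ring.
- have -> : z1 = z1 - s^+2 * x1 + s^+2 * x1 by rewrite subrK.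
  rewrite h2; ring.
Qed.

Lemma key (s1 s2 s' : F) (P p1 p2 : Pt) :
  s1 != s2 -> s1 != s' ->
  phi s1 p1 = phi s1 P -> phi s2 p2 = phi s2 P -> phi s' p1 = phi s' p2 ->
  p1 = P.
Proof.
move=> n12 n1' h1 h2 h3.
move: h3; rewrite (online_eq h1) (online_eq h2).
case: P h1 h2 => [[x0 y0] z0] /= _ _.
set a := p1.1.1 - x0; set b := p2.1.1 - x0.
rewrite /phi /= => -[e1 e2].
have : a * (s1 - s2) * (s1 - s') = 0.
  have -> : a * (s1 - s2) * (s1 - s') =
     ((z0 + s1 ^+ 2 * a - s' ^+ 2 * (x0 + a)) - (z0 + s2 ^+ 2 * b - s' ^+ 2 * (x0 + b)))
     - (s2 + s') * ((y0 + s1 * a - s' * (x0 + a)) - (y0 + s2 * b - s' * (x0 + b))) by ring.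
  by rewrite e1 e2 !subrr mulr0 subrr.
move/eqP; rewrite !mulf_eq0 !subr_eq0 (negbTE n12) (negbTE n1') !orbF => /eqP ha.
have ha' : a = 0 by rewrite /a ha subrr. by rewrite ha' !mulr0 !addr0.
Qed.
End Geo.

End S_A.
Section S_B.
Local Open Scope ring_scope.


Lemma card_union_le (T : finType) k (f : 'I_k -> {set T}) :
  (#|\bigcup_(j < k) f j| <= \sum_(j < k) #|f j|)%N.
Proof.
elim: k f => [|k IH] f; first by rewrite !big_ord0 cards0.
rewrite big_ord_recl [X in (_ <= X)%N]big_ord_recl.
apply: leq_trans (leq_card_setU _ _).1 _.
by rewrite leq_add2l.
Qed.

Section Greedy.
Variable F : finFieldType.
Variable t : nat.
Variable dl : 'I_t -> F.
Hypothesis dl_inj : injective dl.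

Definition compat (P : Pt F) (a : 'I_t) (P' : Pt F) (b : 'I_t) : bool :=
  (a != b) && [forall p : Pt F, ((phi (dl a) p == phi (dl a) P) && (phi (dl b) p == phi (dl b) P'))
       ==> ((p == P) || (p == P'))].

Lemma compat_sym P a P' b : compat P a P' b = compat P' b P a.
Proof.
rewrite /compat eq_sym; congr (_ && _).
apply/forallP/forallP => h p; move: (h p); by rewrite andbC orbC.
Qed.

Lemma badE P a P' b : a != b -> ~~ compat P a P' b ->
  exists p, [/\ phi (dl a) p = phi (dl a) P, phi (dl b) p = phi (dl b) P' & p != P].
Proof.
move=> nab; rewrite /compat nab /= negb_forall => /existsP [p].
rewrite negb_imply negb_or => /andP [/andP [/eqP h1 /eqP h2] /andP [h3 _]].
by exists p.
Qed.

Lemma bad_card P P' b : (#|[set a | ~~ compat P a P' b]| <= 2)%N.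
Proof.
rewrite (cardsD1 b).
have -> : (2 = 1 + 1)%N by [].
apply: leq_add; first by case: (_ \in _).
apply/card_le1_eqP => a1 a2; rewrite !inE => /andP [n1 c1] /andP [n2 c2].
apply/eqP; apply/negPn/negP => n12.
have [p1 [e1 f1 g1]] := badE n1 c1.
have [p2 [e2 f2 g2]] := badE n2 c2.
have : p1 = P.
  apply: (@key F (dl a1) (dl a2) (dl b) P p1 p2) => //.
  - by apply/eqP => /dl_inj e; move: n12; rewrite e eqxx.
  - by apply/eqP => /dl_inj e; move: n1; rewrite e eqxx.
  - by rewrite f1 f2.
by move/eqP; apply/negP.
Qed.

Lemma greedy k (pts : 'I_k -> Pt F) : (2 * k <= t)%N ->
  exists sg : 'I_k -> 'I_t, forall j j', j != j' -> compat (pts j) (sg j) (pts j') (sg j').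
Proof.
elim: k pts => [|k IH] pts hk.
  by exists (fun j : 'I_0 => False_rect _ (notF (ltn_ord j))) => -[].
have hk' : (2 * k <= t)%N by lia.
have [sg' Hsg'] := IH (fun j => pts (lift ord0 j)) hk'.
set U := \bigcup_(j < k) [set a | ~~ compat (pts ord0) a (pts (lift ord0 j)) (sg' j)].
have cU : (#|U| < t)%N.
  apply: leq_ltn_trans (card_union_le _) _.
  apply: leq_ltn_trans (_ : \sum_(j < k) 2 < t)%N.
    by apply: leq_sum => j _; apply: bad_card.
  by rewrite sum_nat_const card_ord; lia.
have : (0 < #|~: U|)%N.
  by move: (cardsC U); rewrite card_ord => e; rewrite -(ltn_add2l #|U|) e addn0.
case/card_gt0P => a; rewrite inE => aU.
exists (fun j => if unlift ord0 j is Some j' then sg' j' else a).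
have Ha : forall j', compat (pts ord0) a (pts (lift ord0 j')) (sg' j').
  move=> j'; apply/negPn/negP => h; move/negP: aU; apply.
  by apply/bigcupP; exists j' => //; rewrite inE.
move=> j1 j2; case: (unliftP ord0 j1) => [j1'|] -> ; case: (unliftP ord0 j2) => [j2'|] -> //.
- by move=> ne; apply: Hsg'; apply: contra ne => /eqP ->.
- by move=> _; rewrite compat_sym.
Qed.
End Greedy.

End S_B.
Section S_C.
Local Open Scope ring_scope.


Section Code.
Variable F : finFieldType.
Variables n t : nat.
Variable io : 'I_n -> Pt F.
Hypothesis io_inj : injective io.
Variable dl : 'I_t -> F.
Hypothesis dl_inj : injective dl.

Definition Q := ('I_t * (F * F))%type.
Definition Amx : 'M['F_2]_(n, #|{: Q}|) :=
  \matrix_(i, c) ((phi (dl (enum_val c).1) (io i) == (enum_val c).2)%:R).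
Definition Gmx : 'M['F_2]_(n, n + #|{: Q}|) := row_mx 1%:M Amx.

Lemma rankG : \rank Gmx = n.
Proof.
apply/eqP; rewrite eqn_leq rank_leq_row /=.
have E : Gmx *m col_mx 1%:M 0 = 1%:M :> 'M['F_2]_n.
  by rewrite /Gmx mul_row_col mulmx1 mulmx0 addr0.
by rewrite -[X in (X <= _)%N](mxrank1 'F_2 n) -E mxrankM_maxl.
Qed.

Definition online (a : 'I_t) (i0 i : 'I_n) := phi (dl a) (io i) == phi (dl a) (io i0).

Definition Rset (i0 : 'I_n) (a : 'I_t) : {set 'I_(n + #|{: Q}|)} :=
  [set c | match split c with
           | inl i => (i != i0) && online a i0 i
           | inr c' => c' == enum_rank ((a, phi (dl a) (io i0)) : Q) end].

Lemma split_r (q : 'I_#|{: Q}|) : split (rshift n q) = inr q.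
Proof. exact: (unsplitK (inr _ q)). Qed.
Lemma split_l (i : 'I_n) : split (lshift #|{: Q}| i) = inl i.
Proof. exact: (unsplitK (inl _ i)). Qed.

Lemma F2_addxx (a : 'F_2) : a + a = 0.
Proof. by case: a => [[|[|]]] // ?; apply/val_inj. Qed.

Lemma recov (i0 : 'I_n) (a : 'I_t) : recovers Gmx (Rset i0 a) i0.
Proof.
set q := enum_rank ((a, phi (dl a) (io i0)) : Q).
exists (fun c => c (rshift n q) + \sum_(i | (i != i0) && online a i0 i) c (lshift #|{: Q}| i)).
move=> x.
rewrite inE split_r eqxx.
have cw : forall c, (x *m Gmx) ord0 c = row_mx x (x *m Amx) ord0 c.
  by move=> c; rewrite /Gmx mul_mx_row mulmx1.
rewrite cw row_mxEr.
rewrite (eq_bigr (fun i => x ord0 i)); last first.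
  by move=> i hi; rewrite inE split_l hi cw row_mxEl.
rewrite !mxE.
rewrite [X in _ = X + _](eq_bigr (fun i => if online a i0 i then x ord0 i else 0)); last first.
  move=> i _; rewrite /Amx !mxE /q enum_rankK /=.
  by rewrite /online; case: (_ == _); rewrite ?mulr1 ?mulr0.
rewrite -big_mkcond /= (bigD1 i0) /=; last by rewrite /online eqxx.
rewrite -addrA (eq_bigl (fun i => (i != i0) && online a i0 i)); last first.
  by move=> i; rewrite andbC.
by rewrite F2_addxx addr0.
Qed.

Lemma disj (i0 i1 : 'I_n) (a b : 'I_t) : compat dl (io i0) a (io i1) b ->
  [disjoint Rset i0 a & Rset i1 b].
Proof.
move=> /andP [nab /forallP hc].
apply/pred0P => c /=; rewrite !inE.
case: (split c) => [i|c'].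
  apply/negP => /andP [/andP [n0 o0] /andP [n1 o1]].
  rewrite /online in o0 o1; move: (hc (io i)); rewrite o0 o1 /= => /orP [] /eqP /io_inj e.
    by move: n0; rewrite e eqxx.
  by move: n1; rewrite e eqxx.
apply/negP => /andP [/eqP -> /eqP /enum_rank_inj [e _]].
by move: nab; rewrite e eqxx.
Qed.

Lemma code_batch k : (2 * k <= t)%N -> is_batch_code k Gmx.
Proof.
move=> hk; split; first exact: rankG.
move=> idx.
have [sg hsg] := greedy dl_inj (fun j => io (idx j)) hk.
exists (fun j => Rset (idx j) (sg j)); split.
  by move=> j j' ne; apply: disj; apply: hsg.
by move=> j; apply: recov.
Qed.

End Code.

End S_C.

Lemma construction (F : finFieldType) n k :
  n <= #|F| ^ 3 -> 2 * k <= #|F| ->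
  batch_code_with_redundancy n k (2 * k * (#|F| * #|F|)).
Proof.
move=> hn hk.
have hP : n <= #|{: Pt F}| by rewrite !card_prod -!mulnA.
have hF : 2 * k <= #|{: F}| by [].
pose io := fun i : 'I_n => (enum_val (widen_ord hP i) : Pt F).
pose dl := fun a : 'I_(2 * k) => (enum_val (widen_ord hF a) : F).
have io_inj : injective io.
  by move=> i j /enum_val_inj /(congr1 val) /= /val_inj.
have dl_inj : injective dl.
  by move=> i j /enum_val_inj /(congr1 val) /= /val_inj.
exists (n + #|{: Q F (2 * k)}|), (Gmx io dl); split.
  exact: code_batch.
by rewrite addKn card_prod card_prod card_ord.
Qed.

Lemma pow_big e : e < 2 ^ e.
Proof. by apply: ltn_expl. Qed.

Lemma main n k : k ^ 2 <= n ->
  exists r, batch_code_with_redundancy n k r /\ r ^ 3 <= 32768 * n ^ 2 * k ^ 5.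
Proof.
move=> hkn.
pose P e := [&& 0 < e, n <= (2 ^ e) ^ 3 & 2 * k <= 2 ^ e].
have exP : exists e, P e.
  exists (n + 2 * k).+1; rewrite /P; apply/ssrbool.and3P; split => //.
    have := pow_big (n + 2 * k).+1; have : 2 ^ (n + 2 * k).+1 <= (2 ^ (n + 2 * k).+1) ^ 3.
      by rewrite -{1}(expn1 (2 ^ _)) leq_pexp2l // expn_gt0.
    lia.
  have := pow_big (n + 2 * k).+1; lia.
case: (ex_minnP exP) => e0 /and3P [e0p hn hk] emin.
have [F _ cF] := pPrimePowerField (isT : prime 2) e0p.
have := construction (F := F) (n := n) (k := k).
rewrite cF => /(_ hn hk) hb.
exists (2 * k * (2 ^ e0 * 2 ^ e0)); split => //.
have [k0|kp] := posnP k; first by rewrite k0 !muln0 mul0n.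
have [e1|e1] := leqP e0 1.
  have -> : e0 = 1 by lia.
  have n1 : 0 < n by apply: leq_trans hkn; rewrite expn_gt0 kp.
  have : 1 <= n ^ 2 by rewrite expn_gt0 n1.
  have : 1 <= k ^ 2 by rewrite expn_gt0 kp.
  move=> h1 h2.
  have -> : (2 * k * (2 ^ 1 * 2 ^ 1)) ^ 3 = 512 * k ^ 3 by ring.
  have -> : 32768 * n ^ 2 * k ^ 5 = 512 * k ^ 3 * (64 * n ^ 2 * k ^ 2) by ring.
  by rewrite -{1}(muln1 (512 * k ^ 3)) leq_mul2l; nia.
have nP : ~~ P e0.-1.
  by apply/negP => /emin; lia.
have eq2 : 2 ^ e0 = 2 * 2 ^ e0.-1 by rewrite -expnS prednK //; lia.
rewrite eq2; set h := 2 ^ e0.-1.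
have -> : (2 * k * (2 * h * (2 * h))) ^ 3 = 512 * k ^ 3 * (h ^ 3) ^ 2 by ring.
move: nP; rewrite /P.
have -> : (0 < e0.-1) = true by lia.
rewrite /= -/h negb_and -!ltnNge => /orP [hA|hB].
  apply: (@leq_trans (512 * k ^ 3 * n ^ 2)).
    by rewrite leq_mul2l leq_exp2r // ltnW // orbT.
  have -> : 32768 * n ^ 2 * k ^ 5 = 512 * k ^ 3 * n ^ 2 * (64 * k ^ 2) by ring.
  rewrite -{1}(muln1 (512 * k ^ 3 * n ^ 2)) leq_mul2l; apply/orP; right.
  by rewrite muln_gt0 expn_gt0 kp.
apply: (@leq_trans (512 * k ^ 3 * ((2 * k) ^ 3) ^ 2)).
  by rewrite leq_mul2l leq_exp2r // leq_exp2r // ltnW // orbT.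
have -> : 512 * k ^ 3 * ((2 * k) ^ 3) ^ 2 = 32768 * k ^ 5 * (k ^ 2) ^ 2 by ring.
have -> : 32768 * n ^ 2 * k ^ 5 = 32768 * k ^ 5 * n ^ 2 by ring.
by rewrite leq_mul2l leq_exp2r // hkn orbT.
Qed.

End Helpers.
Import Helpers.
Lemma INR_expn a b : INR (a ^ b)%N = pow (INR a) b.
Proof. elim: b => [|b IH]; first by []. by rewrite expnS mult_INR IH. Qed.

Lemma INR_muln a b : INR (a * b)%N = Rmult (INR a) (INR b).
Proof. exact: mult_INR. Qed.

Lemma INR_leq a b : (a <= b)%N -> Rle (INR a) (INR b).
Proof. by move/leP; apply: le_INR. Qed.

Lemma INR_leq_inv a b : Rle (INR a) (INR b) -> (a <= b)%N.
Proof. by move/INR_le/leP. Qed.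

Section RealPart.
Local Open Scope R_scope.
Lemma floor_le y : 0 <= y -> INR (Z.to_nat (Int_part y)) <= y.
Proof.
move=> y0; have [h1 _] := base_Int_part y.
case: (Z.le_gt_cases 0 (Int_part y)) => hz.
  by rewrite INR_IZR_INZ Z2Nat.id.
by move: hz; case: (Int_part y) => [|p|p] hz /=; lia || lra.
Qed.
End RealPart.

Section Part2.
Local Open Scope R_scope.

Lemma cube_le a b : 0 <= a -> 0 <= b -> a ^ 3 <= b ^ 3 -> a <= b.
Proof.
move=> ha hb h; case: (Rle_lt_dec a b) => // hlt.
have : b ^ 3 < a ^ 3.
  simpl; rewrite !Rmult_1_r.
  have h1 : b * b <= a * a by apply: Rmult_le_compat; lra.
  have h2 : 0 < a * a by nra.
  nra.
lra.
Qed.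

Lemma part2 eps : Rlt 0 eps /\ Rlt eps one_half ->
     exists (C : R) (N0 : nat), forall n : nat, (N0 <= n)%N ->
       exists r : nat, batch_code_with_redundancy n (floor_pow n eps) r /\
         Rle (INR r) (Rmult C (Rpower (INR n) (cor_exponent eps))).
Proof.
rewrite /one_half => -[e0 e1].
exists 32, 1%N => n hn.
have n1 : 1 <= INR n by have := INR_leq hn.
have n0 : 0 < INR n by lra.
set y := Rpower (INR n) eps.
have ny : 0 < y by apply: exp_pos.
have hk : INR (floor_pow n eps) <= y by apply: (floor_le (Rlt_le _ _ ny)).
set k := floor_pow n eps in hk *.
have k0 := pos_INR k.
have hk2 : (k ^ 2 <= n)%N.
  apply: INR_leq_inv; rewrite INR_expn.
  apply: (Rle_trans _ (y ^ 2)); first by apply: pow_incr; lra.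
  rewrite -Rpower_pow // /y Rpower_mult.
  rewrite -{2}(Rpower_1 (INR n)) //; apply: Rle_Rpower => //.
  simpl; lra.
have [r [hb hr]] := main hk2.
exists r; split => //.
set z := Rpower (INR n) (cor_exponent eps).
have z0 : 0 < z by apply: exp_pos.
have ez : z ^ 3 = INR n ^ 2 * y ^ 5.
  rewrite -Rpower_pow // /z Rpower_mult.
  have -> : cor_exponent eps * INR 3 = INR 2 + eps * INR 5.
    rewrite /cor_exponent; simpl; lra.
  by rewrite Rpower_plus Rpower_pow // -Rpower_mult Rpower_pow.
apply: cube_le; [exact: pos_INR | lra |].
move: hr; rewrite (_ : 32768 = 32 ^ 3)%N // => /INR_leq.
rewrite !INR_muln => h0.
move: h0 hk k0 ez; set c := INR 32; set a := INR r; set b := INR n; set d := INR k => h0 hk k0 ez.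
have h : a ^ 3 <= c ^ 3 * b ^ 2 * d ^ 5 by simpl; rewrite !Rmult_1_r; lra.
apply: (Rle_trans _ _ _ h).
have -> : (32 * z) ^ 3 = c ^ 3 * (b ^ 2 * y ^ 5).
  rewrite -ez Rpow_mult_distr; congr (_ * _).
  by rewrite /c INR_IZR_INZ.
rewrite Rmult_assoc; apply: Rmult_le_compat_l; first by apply: pow_le; apply: pos_INR.
apply: Rmult_le_compat_l; first by apply: pow_le; apply: pos_INR.
by apply: pow_incr; lra.
Qed.
End Part2.

Theorem corollary1 :
  (forall kf : nat -> nat,
     (forall m : nat, (0 < m)%N ->
        exists N0 : nat, forall n : nat, (N0 <= n)%N -> (m * kf n ^ 2 <= n)%N) ->
     exists C N0 : nat, forall n : nat, (N0 <= n)%N ->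
       exists r : nat, batch_code_with_redundancy n (kf n) r /\
                       (r ^ 3 <= C * n ^ 2 * kf n ^ 5)%N)
  /\
  (forall eps : R, Rlt 0 eps /\ Rlt eps one_half ->
     exists (C : R) (N0 : nat), forall n : nat, (N0 <= n)%N ->
       exists r : nat, batch_code_with_redundancy n (floor_pow n eps) r /\
         Rle (INR r) (Rmult C (Rpower (INR n) (cor_exponent eps)))).
Proof.
split; last exact: part2.
move=> kf hkf.
have [N0 HN0] := hkf 1%N isT.
exists 32768%N, N0 => n hn.
apply: main.
by rewrite -(mul1n (kf n ^ 2)); apply: HN0.
Qed.
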